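(* Let $X$ be a finite set and $\mathcal{U}=\{C_1,\dots,C_n\}$ a family of $n$ distinct subsets of $X$ with $\bigcup\mathcal{U}=X$, and consider the Kochen-Specker-type support $S$ on $\mathcal{U}$ with $\mathcal{F}=F_{\mathbb{Z}}S$. Suppose $\mathcal{U}$ is connected. If for some $C_k\in\mathcal{U}$ and some $s\in S(C_k)$ the obstruction $\gamma(s)$ is defined and vanishes, then $\gcd\{d_m\mid m\in X\}$ divides $|\mathcal{U}|=n$, where $d_m:=|\{C\in\mathcal{U}\mid m\in C\}|$.
   Context: Outcomes are $O=\{0,1\}$. For $C\in\mathcal{U}$ and $m\in C$, $s_{C,m}\in\{0,1\}^C$ assigns $1$ to $m$ and $0$ to every other element of $C$. The Kochen-Specker support is the presheaf $S$ with $S(C)=\{s_{C,m}\mid m\in C\}$ for $C\in\mathcal{U}$ and, for $U$ contained in some member of $\mathcal{U}$, $S(U)=\{t|U: C\in\mathcal{U},\,U\subseteq C,\,t\in S(C)\}$, with restriction of functions. $\mathcal{F}=F_{\mathbb{Z}}S$: $\mathcal{F}(U)$ is the free abelian group on $S(U)$ (formal $\mathbb{Z}$-linear combinations of sections), with restriction $\sum a_tt\mapsto\sum a_t(t|V)$. Čech cochains relative to the nerve (lists $\sigma=(V_0,\dots,V_q)$ of members of $\mathcal{U}$ with $|\sigma|=\bigcap V_l\neq\varnothing$): $C^q(\mathcal{U},\mathcal{G})=\prod_\sigma\mathcal{G}(|\sigma|)$, $\delta^q(\omega)(\sigma)=\sum_{j=0}^{q+1}(-1)^j\omega(\partial_j\sigma)|_{|\sigma|}$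 ($\partial_j$ omits the $j$-th entry), $H^q=\ker\delta^q/\operatorname{im}\delta^{q-1}$. For $U\subseteq X$, $\mathcal{F}_{\bar U}(V)=\{r\in\mathcal{F}(V):r|(U\cap V)=0\}$. Obstruction of $s\in S(C_k)$: it is defined when there exist $s_i\in S(C_i)$ ($i=1,\dots,n$) with $s_k=s$ and $s_i|(C_k\cap C_i)=s|(C_k\cap C_i)$; then with $c=(s_1,\dots,s_n)\in C^0(\mathcal{U},\mathcal{F})$ and $z=\delta^0(c)$, $z$ is a $1$-cocycle of $C^\bullet(\mathcal{U},\mathcal{F}_{\bar C_k})$ and $\gamma(s):=[z]\in H^1(\mathcal{U},\mathcal{F}_{\bar C_k})$. The cover is connected if for any $C,C'\in\mathcal{U}$ there is a sequence $C=D_0,D_1,\dots,D_{p+1}=C'$ of members of $\mathcal{U}$ with $D_i\cap D_{i+1}\neq\varnothing$ for all $i$. *)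

(* Defs.v *)
From HB Require Import structures.
From mathcomp Require Import all_boot all_order all_algebra.
Set Implicit Arguments. Unset Strict Implicit. Unset Printing Implicit Defensive.
Import GRing.Theory.
Local Open Scope ring_scope.

(* Encoding conventions.
   - X : finType is the finite set of measurements.
   - The cover U = {C_1,...,C_n} is a function C : 'I_n -> {set X}
     (injective = the C_i are distinct).
   - A section t : V -> {0,1} (V a subset of X) is encoded by the subset
     t^{-1}(1) ⊆ V, a {set X}.  Restriction t|W is then t :&: W, and
     s_{C,m} is [set m].
   - The free abelian group on sections is embedded in the ambient group
     {ffun {set X} -> int} of integer coefficients on all subsets;
     F(V) is the subgroup of those combinations supported on S(V).
   - Restriction of formal combinations is the linear extension of t |-> t|W. *)

Section KS.
Variables (X : finType) (n : nat) (C : 'I_n -> {set X}).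

Definition fz := {ffun {set X} -> int}.

Definition KS_member (V : {set X}) : {set {set X}} := [set [set m] | m in V].

Definition KS (V : {set X}) : {set {set X}} :=
  if [exists i, C i == V] then KS_member V
  else [set t :&: V | t in \bigcup_(i | V \subset C i) KS_member (C i)].

Definition restr (W : {set X}) (r : fz) : fz :=
  [ffun B => \sum_(A : {set X} | A :&: W == B) r A].

Definition inF (V : {set X}) (r : fz) : bool :=
  [forall A, (r A != 0) ==> (A \in KS V)].

Definition inFbar (U V : {set X}) (r : fz) : bool :=
  inF V r && (restr (U :&: V) r == 0).

Definition basis (t : {set X}) : fz := [ffun A => (A == t)%:Z].

Definition delta0 (c : 'I_n -> fz) (i j : 'I_n) : fz :=
  restr (C i :&: C j) (c j) - restr (C i :&: C j) (c i).

(* the obstruction gamma(s) is defined and vanishes: there is a compatible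
   family (s_i) extending s such that z = delta^0 (s_i) is a coboundary in
   C^bullet(U, F_{\bar C_k}) *)
Definition obstruction_vanishes (k : 'I_n) (s : {set X}) : Prop :=
  exists sec : 'I_n -> {set X},
    [/\ forall i, sec i \in KS (C i),
        sec k = s,
        forall i, sec i :&: (C k :&: C i) = s :&: (C k :&: C i) &
        exists b : 'I_n -> fz,
          (forall i, C i != set0 -> inFbar (C k) (C i) (b i)) /\
          (forall i j, C i :&: C j != set0 ->
              delta0 b i j = delta0 (fun l => basis (sec l)) i j)].

Definition cover_connected : Prop :=
  forall i j : 'I_n, exists (p : nat) (D : nat -> 'I_n),
    [/\ D 0%N = i, D p.+1 = j &
        forall l, (l <= p)%N -> C (D l) :&: C (D l.+1) != set0].

Definition degree (m : X) : nat := #|[set i | m \in C i]|.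

End KS.

(* Main.v *)
Require Import Defs.
From mathcomp Require Import all_boot all_order all_algebra.
From mathcomp Require Import zify.
Set Implicit Arguments. Unset Strict Implicit.
Import GRing.Theory.
Local Open Scope ring_scope.

Lemma sup (X : finType) n (C : 'I_n -> {set X}) i (r : fz X) :
  inF C (C i) r -> forall A, r A != 0 -> exists2 x, x \in C i & A = [set x].
Proof.
move/forallP=> H A nz; have := implyP (H A) nz.
rewrite /KS; have ->: [exists j, C j == C i] by apply/existsP; exists i.
by rewrite /KS_member => /imsetP[x xC ->]; exists x.
Qed.

Lemma total_restr (X : finType) (W : {set X}) (r : fz X) :
  \sum_B restr W r B = \sum_A r A.
Proof.
rewrite [RHS](partition_big (fun A => A :&: W) predT) //=.
by apply eq_bigr => B _; rewrite ffunE.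
Qed.

Lemma total_basis (X : finType) (t : {set X}) : \sum_A basis t A = 1.
Proof.
rewrite (bigD1 t) //= ffunE eqxx big1 ?addr0 // => A At.
by rewrite ffunE (negbTE At).
Qed.

Lemma sum_single (X : finType) (V : {set X}) (r : fz X) :
  (forall A, r A != 0 -> exists2 x, x \in V & A = [set x]) ->
  \sum_A r A = \sum_(m in V) r [set m].
Proof.
move=> H.
rewrite (bigID (fun A => A \in [set [set x] | x in V])) /= [X in _ + X]big1 ?addr0.
  by rewrite big_imset //= => x y _ _; apply: set1_inj.
move=> A HA; have [//|/H [x xV Ax]] := eqVneq (r A) 0.
by case/negP: HA; rewrite Ax; apply/imsetP; exists x.
Qed.

Lemma restr_single (X : finType) (W V : {set X}) (r : fz X) m :
  (forall A, r A != 0 -> exists2 x, x \in V & A = [set x]) ->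
  m \in W -> restr W r [set m] = r [set m].
Proof.
move=> H mW; rewrite ffunE (bigD1 [set m]) /=; last first.
  by apply/eqP/setIidPl; rewrite sub1set.
rewrite big1 ?addr0 // => A /andP[/eqP AW Am].
have [//|/H [x _ Ax]] := eqVneq (r A) 0.
have: m \in A :&: W by rewrite AW set11.
by rewrite Ax inE => /andP[/set1P mx _]; move: Am; rewrite Ax mx eqxx.
Qed.

Theorem proposition8 (X : finType) (n : nat) (C : 'I_n -> {set X})
    (Cinj : injective C)
    (Ccover : \bigcup_(i < n) C i = [set: X])
    (Hconn : cover_connected C)
    (k : 'I_n) (s : {set X}) (Hs : s \in KS C (C k))
    (Hvan : obstruction_vanishes C k s) :
  (\big[gcdn/0%N]_(m : X) degree C m %| n)%N.
Proof.
move: Hvan => [sec [Hsec _ _ [b [Hb Hd]]]].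
have Cne i : C i != set0.
  have [p [D [D0 _ HD]]] := Hconn i i.
  have := HD 0%N isT; rewrite D0; apply: contra => /eqP ->; by rewrite set0I.
have Hc i : inF C (C i) (basis (sec i)).
  apply/forallP => A; apply/implyP; rewrite ffunE.
  by case: (eqVneq A (sec i)) => [-> _|//]; apply: Hsec.
have Sc i := sup (Hc i).
have Sb i := sup (proj1 (andP (Hb i (Cne i)))).
have Tb i : \sum_A b i A = 0.
  move: (Hb i (Cne i)) => /andP[_ /eqP H0].
  rewrite -(total_restr (C k :&: C i)) H0; apply big1 => ? _; by rewrite ffunE.
pose e i m := basis (sec i) [set m] - b i [set m].
have Te i : \sum_(m in C i) e i m = 1.
  by rewrite /e sumrB -(sum_single (Sc i)) -(sum_single (Sb i)) total_basis Tb subr0.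
have Eq i j m : m \in C i -> m \in C j -> e i m = e j m.
  move=> mi mj.
  have W : C i :&: C j != set0 by apply/set0Pn; exists m; rewrite inE mi mj.
  have := congr1 (fun f : fz X => f [set m]) (Hd i j W).
  have mW : m \in C i :&: C j by rewrite inE mi mj.
  have mW' : m \in C j :&: C i by rewrite inE mi mj.
  have Rb l : m \in C l -> restr (C i :&: C j) (b l) [set m] = b l [set m].
    by move=> _; apply: (restr_single (Sb l) mW).
  have Rc l : restr (C i :&: C j) (basis (sec l)) [set m] = basis (sec l) [set m].
    by apply: (restr_single (Sc l) mW).
  rewrite /delta0 /=; move: (Rb i mi) (Rb j mj) (Rc i) (Rc j).
  move: (restr (C i :&: C j)) => R.
  rewrite !ffunE => -> -> -> ->.
  rewrite /e !ffunE; lia.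
pose a m := if [pick i | m \in C i] is Some i then e i m else 0.
have Hn : (n%:Z) = \sum_m (a m *+ degree C m).
  transitivity (\sum_(i < n) \sum_(m in C i) e i m).
    by rewrite (eq_bigr _ (fun i _ => Te i)) sumr_const card_ord natz.
  rewrite (exchange_big_dep xpredT) //=.
  apply eq_bigr => m _; rewrite /a.
  case: pickP => [i0 mi0|none].
    rewrite (eq_bigr (fun=> e i0 m)) => [|i mi]; last exact: Eq.
    by rewrite /degree -sumr_const; apply eq_bigl => i; rewrite inE.
  by rewrite mul0rn big1 // => i; rewrite none.
set g := \big[gcdn/0%N]_(m : X) degree C m.
have gd m : (g %| degree C m)%N by rewrite /g (bigD1 m) //= dvdn_gcdl.
have : (g%:Z %| n%:Z)%Z.
  rewrite Hn; apply: rpred_sum => m _.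
  rewrite -mulr_natr natz; apply: dvdz_mull; exact: gd.
by [].
Qed.
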